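(* Let $p_1,\ldots,p_m\in[0,1]$, $\alpha\in[0,1]$, and let $h_\alpha$ and $d_\alpha$ be as in the context. Then for every nonempty $S\subseteq\{1,\ldots,m\}$, \[ d_\alpha(S)=\max_{1\le u\le |S|}\Big(1-u+\big|\{i\in S: h_\alpha p_i\le u\alpha\}\big|\Big). \]
   Context: Setting: $m$ hypotheses with $p$-values $p_1,\ldots,p_m\in[0,1]$. For $I\subseteq\{1,\ldots,m\}$ and $1\le i\le |I|$, $p_{(i:I)}$ denotes the $i$-th smallest value of $\{p_j: j\in I\}$ (as a multiset). The Simes local test rejects $I$ ($I\in\mathcal{U}_\alpha$) iff there is $1\le i\le |I|$ with $|I|\,p_{(i:I)}\le i\alpha$ (so $\emptyset\notin\mathcal{U}_\alpha$). Closed testing: $\mathcal{X}_\alpha=\{I: J\in\mathcal{U}_\alpha \text{ for all } J\supseteq I\}$ (all sets are subsets of $\{1,\ldots,m\}$). For $S\subseteq\{1,\ldots,m\}$, $t_\alpha(S)=\max\{|I|: I\subseteq S,\ I\notin\mathcal{X}_\alpha\}$ and $d_\alpha(S)=|S|-t_\alpha(S)$. Let $r_1,\ldots,r_m$ be a permutation with $p_{r_1}\le\cdots\le p_{r_m}$, $K_i=\{r_{m-i+1},\ldots,r_m\}$, and $h_\alpha=\max\{0\le i\le m: K_i\notin\mathcal{U}_\alpha\}$. *)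

(* Defs.v *)
(* Indices {1,...,m} are represented by 'I_m (0-based). *)
From mathcomp Require Import all_boot all_order all_algebra.
Set Implicit Arguments. Unset Strict Implicit. Unset Printing Implicit Defensive.
Import Order.TTheory GRing.Theory Num.Theory.
Local Open Scope ring_scope.

Section Simes.
Variables (R : realFieldType) (m : nat) (p : 'I_m -> R) (alpha : R).

(* p_{(i:I)} for 0-based i : the (i+1)-th smallest value of {p_j : j in I}
   as a multiset *)
Definition pord (I : {set 'I_m}) (i : nat) : R :=
  nth 0 (sort <=%R [seq p j | j <- enum I]) i.

(* Simes local test: I in U_alpha iff exists 1 <= i <= |I| with
   |I| p_{(i:I)} <= i alpha  (here i = k+1, k : 'I_|I|) *)
Definition simes_rej (I : {set 'I_m}) : bool :=
  [exists k : 'I_#|I|, #|I|%:R * pord I k <= (k.+1)%:R * alpha].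

Definition ct_rej (I : {set 'I_m}) : bool :=
  [forall J : {set 'I_m}, (I \subset J) ==> simes_rej J].

Definition t_alpha (S : {set 'I_m}) : nat :=
  \max_(I : {set 'I_m} | (I \subset S) && ~~ ct_rej I) #|I|.

Definition d_alpha (S : {set 'I_m}) : nat := #|S| - t_alpha S.

(* Given the sorting permutation r (0-based: r_{k+1} = r k),
   K_i = {r_{m-i+1},...,r_m} *)
Definition Kset (r : 'I_m -> 'I_m) (i : nat) : {set 'I_m} :=
  [set r k | k : 'I_m & m - i <= k]%N.

Definition h_alpha (r : 'I_m -> 'I_m) : nat :=
  \max_(i < m.+1 | ~~ simes_rej (Kset r i)) i.

End Simes.

(* Main.v *)
Require Import Defs.
From mathcomp Require Import all_boot all_order all_algebra.
Import Order.TTheory GRing.Theory Num.Theory.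
Local Open Scope ring_scope.
Set Implicit Arguments. Unset Strict Implicit. Unset Printing Implicit Defensive.

Lemma card_count (T : finType) (I : {set T}) (Q : pred T) :
  #|[set j in I | Q j]| = count Q (enum I).
Proof.
rewrite cardE /enum_mem -size_filter -filter_predI; congr size.
apply: eq_filter => j /=; by rewrite !inE andbC.
Qed.

Lemma sorted_nth_count (R : realFieldType) (s : seq R) (P : pred R)
  (HP : forall x y, y <= x -> P x -> P y) :
  sorted <=%R s -> forall k, (k < size s)%N -> P (nth 0 s k) = (k < count P s)%N.
Proof.
elim: s => [|a s IH] //= Hs k Hk.
have Hall : all (fun y => a <= y) s by apply: order_path_min Hs; exact: le_trans.
have Hs' : sorted <=%R s by apply: path_sorted Hs.
have Hc : ~~ P a -> count P s = 0%N.
  move=> Pa; apply/eqP; rewrite -leqn0 leqNgt -has_count; apply/hasP => -[y ys Py].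
  by move/allP: Hall => /(_ y ys) ay; rewrite (HP _ _ ay Py) in Pa.
case: k Hk => [|k] Hk /=.
  case Pa: (P a) => //=; by rewrite Hc ?Pa.
rewrite IH //; case Pa: (P a) => //=.
rewrite Hc ?Pa //= ltn0; apply/negbTE; apply: contraFN Pa => Pk.
Qed.

From mathcomp Require Import zify.

Section Main.
Variables (R : realFieldType) (m : nat) (p : 'I_m -> R) (alpha : R)
  (r : 'I_m -> 'I_m).
Hypothesis hp : forall j, 0 <= p j <= 1.
Hypothesis halpha : 0 <= alpha <= 1.
Hypothesis hr_bij : bijective r.
Hypothesis hr_sorted : forall a b : 'I_m, (a <= b)%N -> p (r a) <= p (r b).

Definition cnt (A : {set 'I_m}) (Q : pred 'I_m) := #|[set j in A | Q j]|.
Definition sr_cnt (n : nat) (A : {set 'I_m}) (k : nat) :=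
  cnt A (fun j => n%:R * p j <= k%:R * alpha).

Lemma p_ge0 j : 0 <= p j.
Proof. by case/andP: (hp j). Qed.

Lemma cnt_split (A : {set 'I_m}) (Q : pred 'I_m) : #|[set j | Q j]| = (cnt A Q + cnt (~: A) Q)%N.
Proof.
rewrite -(cardsID A [set j | Q j]) /cnt; congr addn; apply: eq_card => j;
  rewrite !inE //; by rewrite andbC.
Qed.

Lemma cnt_le (A : {set 'I_m}) (Q : pred 'I_m) : (cnt A Q <= #|A|)%N.
Proof. apply: subset_leq_card; apply/subsetP => j; rewrite inE; by case/andP. Qed.

Lemma cnt_full (A : {set 'I_m}) (Q : pred 'I_m) : (forall j, j \in A -> Q j) -> cnt A Q = #|A|.
Proof.
move=> H; rewrite /cnt; apply: eq_card => j; rewrite inE.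
by case jA: (j \in A) => //=; rewrite H.
Qed.

Lemma cnt_sub (A B : {set 'I_m}) (Q Q' : pred 'I_m) : A \subset B -> (forall j, Q j -> Q' j) ->
  (cnt A Q <= cnt B Q')%N.
Proof.
move=> AB QQ; apply: subset_leq_card; apply/subsetP => j; rewrite !inE.
case/andP => jA Qj; rewrite (subsetP AB _ jA); exact: QQ.
Qed.

Lemma cardC (A : {set 'I_m}) : #|~: A| = (m - #|A|)%N.
Proof. have H := cardsC A; rewrite card_ord in H; lia. Qed.

Lemma card_le_m (A : {set 'I_m}) : (#|A| <= m)%N.
Proof. have := max_card A; by rewrite card_ord. Qed.

Lemma simesP (I : {set 'I_m}) : simes_rej p alpha I =
  [exists k : 'I_#|I|, (k.+1 <= sr_cnt #|I| I k.+1)%N].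
Proof.
apply: eq_existsb => k; rewrite /pord.
set P := (fun v => #|I|%:R * v <= k.+1%:R * alpha).
have -> : #|I|%:R * nth 0 (sort <=%R [seq p j | j <- enum I]) k <= k.+1%:R * alpha
   = P (nth 0 (sort <=%R [seq p j | j <- enum I]) k) by [].
rewrite sorted_nth_count.
- by rewrite count_sort count_map /sr_cnt /cnt card_count.
- move=> x y yx; rewrite /P => Px; apply: le_trans Px.
  by apply: ler_wpM2l => //; rewrite ler0n.
- apply: sort_sorted; exact: le_total.
- by rewrite size_sort size_map -cardE.
Qed.

Lemma simes_rejI (I : {set 'I_m}) k : (1 <= k <= #|I|)%N -> (k <= sr_cnt #|I| I k)%N ->
  simes_rej p alpha I.
Proof.
case: k => [|k] // /andP [_ kI] H; rewrite simesP; apply/existsP.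
by exists (Ordinal kI).
Qed.

Lemma simes_rejE (I : {set 'I_m}) : simes_rej p alpha I ->
  exists2 k, (1 <= k <= #|I|)%N & (k <= sr_cnt #|I| I k)%N.
Proof.
rewrite simesP => /existsP [k Hk]; exists k.+1 => //.
by rewrite /= ltn_ord.
Qed.

Lemma simes_rej0 : ~~ simes_rej p alpha set0.
Proof.
apply/negP => /simes_rejE [k]; by rewrite cards0; case: k.
Qed.


Lemma card_geq n : (n <= m)%N -> #|[set k : 'I_m | (m - n <= k)%N]| = n.
Proof.
move=> nm.
have -> : [set k : 'I_m | (m - n <= k)%N] = [set k in [set: 'I_m] | (m - n <= k)%N].
  by apply/setP => k; rewrite !inE.
rewrite card_count enum_setT.
rewrite -enumT -(count_map val (fun i => (m - n <= i)%N)) val_enum_ord.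
have -> : iota 0 m = iota 0 (m - n)%N ++ iota (m - n)%N n.
  by rewrite -{2}(add0n (m - n)%N) -iotaD subnK.
rewrite count_cat.
rewrite (@eq_in_count _ _ pred0); last first.
  by move=> i; rewrite mem_iota /= add0n => H; rewrite leqNgt H.
rewrite count_pred0 add0n (@eq_in_count _ _ predT); last first.
  by move=> i; rewrite mem_iota /= => /andP [H _]; rewrite H.
by rewrite count_predT size_iota.
Qed.

Lemma r_inj : injective r.
Proof. exact: bij_inj. Qed.

Lemma K_card n : (n <= m)%N -> #|Kset r n| = n.
Proof.
move=> nm; rewrite /Kset card_imset; last exact: r_inj.
exact: card_geq.
Qed.

Lemma K_top n a b : a \notin Kset r n -> b \in Kset r n -> p a <= p b.
Proof.
case: hr_bij => g rg gr.
move=> aK /imsetP [k]; rewrite inE => Hk ->.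
have [k' ea] : exists k', a = r k' by exists (g a); rewrite gr.
subst a; apply: hr_sorted.
move: aK; rewrite /Kset (mem_imset _ _ r_inj) inE -ltnNge => H.
by apply: ltnW; apply: (leq_trans H Hk).
Qed.

Lemma K0 : Kset r 0 = set0.
Proof.
apply/setP => x; rewrite inE; apply/negP => /imsetP [k]; rewrite inE subn0.
by rewrite leqNgt ltn_ord.
Qed.

Definition hh := h_alpha p alpha r.

Lemma h_spec : (hh <= m)%N /\ ~~ simes_rej p alpha (Kset r hh).
Proof.
have P0 : ~~ simes_rej p alpha (Kset r (@ord0 m)) by rewrite /= K0; exact: simes_rej0.
rewrite /hh /h_alpha (@bigop.bigmax_eq_arg _ ord0
  (fun i : 'I_m.+1 => ~~ simes_rej p alpha (Kset r i)) (fun i : 'I_m.+1 => val i) P0).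
case: arg_maxnP => //= i Hi _; split => //; by rewrite -ltnS ltn_ord.
Qed.

Lemma h_max n : (n <= m)%N -> ~~ simes_rej p alpha (Kset r n) -> (n <= hh)%N.
Proof.
rewrite -ltnS => nm H; rewrite /hh /h_alpha.
exact: (@leq_bigmax_cond _ _ (fun i : 'I_m.+1 => val i) (Ordinal nm)).
Qed.


Lemma topsub (A : {set 'I_m}) q : (q <= #|A|)%N ->
  exists T : {set 'I_m}, [/\ T \subset A, #|T| = q &
    forall a b, a \in A -> a \notin T -> b \in T -> p a <= p b].
Proof.
move=> qA; move Hd: (#|A| - q)%N => d; elim: d q qA Hd => [|d IH] q qA Hd.
  exists A; split => //; first by lia.
  by move=> a b ->.
have q1 : (q.+1 <= #|A|)%N by lia.
have [|T [TA Tc Ttop]] := IH q.+1 q1; first by lia.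
have /set0Pn [b0 b0T] : T != set0 by rewrite -card_gt0 Tc.
case: (@arg_minP _ R _ b0 (mem T) p b0T) => bm bmT bmmin.
exists (T :\ bm); split.
- exact: subset_trans (subsetDl T [set bm]) TA.
- have bmT' : bm \in T := bmT; have := cardsD1 bm T; rewrite Tc bmT' add1n; by case.
- move=> a b aA; rewrite !inE negb_and negbK => /orP [/eqP -> | aT] /andP [_ bT].
    exact: bmmin.
  exact: Ttop.
Qed.

Definition cq (A : {set 'I_m}) (c y : R) := cnt A (fun j => c * p j <= y).

Lemma cmpQ n (Q : pred 'I_m) (J : {set 'I_m}) : (n <= m)%N ->
  (forall a b, p a <= p b -> Q b -> Q a) ->
  (0 < cnt (Kset r n) Q)%N -> (cnt (Kset r n) Q + #|J| <= cnt J Q + n)%N.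
Proof.
move=> nm HQ; rewrite {1}/cnt card_gt0 => /set0Pn [b]; rewrite inE => /andP [bK Qb].
have H1 := cnt_split (Kset r n) Q.
have H2 := cnt_split J Q.
have H3 : cnt (~: Kset r n) Q = (m - n)%N.
  rewrite cnt_full ?cardC ?K_card // => j; rewrite inE => jK.
  apply: HQ Qb; exact: K_top jK bK.
have H4 := cnt_le (~: J) Q.
rewrite cardC in H4; have Jm := card_le_m J.
lia.
Qed.

Lemma cmp n c y (J : {set 'I_m}) : (n <= m)%N -> 0 <= c ->
  (0 < cq (Kset r n) c y)%N -> (cq (Kset r n) c y + #|J| <= cq J c y + n)%N.
Proof.
move=> nm c0; apply: cmpQ => // a b ab; apply: le_trans.
exact: ler_wpM2l.
Qed.

Lemma easyE (I : {set 'I_m}) k : (1 <= k <= #|I|)%N -> (k <= sr_cnt hh I k)%N ->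
  ct_rej p alpha I.
Proof.
move=> /andP [k1 kI] Hk; apply/forallP => J; apply/implyP => IJ.
have IJc := subset_leq_card IJ.
case: (leqP #|J| hh) => HJ.
  apply: (@simes_rejI J k); first by rewrite k1 (leq_trans kI IJc).
  apply: (leq_trans Hk); apply: cnt_sub IJ _ => j /=; apply: le_trans.
  by apply: ler_wpM2r; [exact: p_ge0 | rewrite ler_nat].
have Jm := card_le_m J.
have : simes_rej p alpha (Kset r #|J|).
  by apply: contraLR HJ => H; rewrite -leqNgt; exact: h_max Jm H.
move/simes_rejE; rewrite K_card // => -[k' /andP [k'1 k'J] Hk'].
apply: (@simes_rejI J k'); first by rewrite k'1.
have := @cmp #|J| #|J|%:R (k'%:R * alpha) J Jm (ler0n _ _) (leq_trans k'1 Hk').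
rewrite /sr_cnt /cq in Hk' *; rewrite leq_add2r => H; exact: leq_trans Hk' H.
Qed.


Lemma hardH' (I : {set 'I_m}) :
  (forall k, (1 <= k <= #|I|)%N -> (sr_cnt hh I k < k)%N) -> ~~ ct_rej p alpha I.
Proof.
move=> Hn; have [hm hK] := h_spec.
have Im := card_le_m I.
case: (leqP #|I| hh) => HI; last first.
  have h1m : (hh.+1 <= m)%N by apply: leq_trans HI Im.
  have : simes_rej p alpha (Kset r hh.+1).
    case: (boolP (simes_rej p alpha (Kset r hh.+1))) => // H.
    by have := h_max h1m H; rewrite ltnn.
  move/simes_rejE; rewrite K_card // => -[k /andP [k1 kh] Hk].
  have C := @cmp hh.+1 hh.+1%:R (k%:R * alpha) I h1m (ler0n _ _) (leq_trans k1 Hk).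
  have C2 : (sr_cnt hh.+1 I k <= sr_cnt hh I k)%N.
    apply: cnt_sub (subxx I) _ => j /=; apply: le_trans.
    by apply: ler_wpM2r; [exact: p_ge0 | rewrite ler_nat].
  have kI : (1 <= k <= #|I|)%N by rewrite k1 (leq_trans kh HI).
  have C3 := Hn k kI.
  rewrite /sr_cnt /cq in Hk C C2 C3.
  have C4 : (k <= cnt I (fun j => (hh.+1%:R * p j <= k%:R * alpha)%R))%N.
    rewrite -(leq_add2r #|I|); apply: leq_trans (leq_trans _ C) _.
      by rewrite leq_add2r.
    by rewrite leq_add2l.
  by move: (leq_trans C4 C2); rewrite leqNgt C3.
have cI : (hh - #|I| <= #|~: I|)%N by rewrite cardC; apply: leq_sub2r.
have [T [TI Tc Ttop]] := topsub cI.
have IT0 : I :&: T = set0.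
  apply/setP => j; rewrite !inE; case jI: (j \in I) => //=; apply/negP => jT.
  by move: (subsetP TI j jT); rewrite inE jI.
have Jc : #|I :|: T| = hh by rewrite cardsU IT0 cards0 subn0 Tc subnKC.
apply/forallPn; exists (I :|: T); rewrite subsetUl /=.
rewrite simesP; apply/existsPn => k; rewrite -ltnNge.
move: (ltn_ord k); move: (k : nat) => k0; rewrite Jc => k0h.
set Q := (fun j => hh%:R * p j <= k0.+1%:R * alpha).
rewrite /sr_cnt -/Q.
case: (boolP [exists t in T, Q t]).
  case/existsP => t /andP [tT Qt].
  have H1 := cnt_split (I :|: T) Q.
  have H2 := cnt_split (Kset r hh) Q.
  have H3 : cnt (~: (I :|: T)) Q = (m - hh)%N.
    rewrite cnt_full ?cardC ?Jc // => j; rewrite !inE negb_or => /andP [jI jT].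
    apply: le_trans Qt; apply: ler_wpM2l; first by rewrite ler0n.
    by apply: Ttop jT tT; rewrite inE.
  have H4 := cnt_le (~: Kset r hh) Q.
  rewrite cardC K_card // in H4.
  have H5 : ~~ (k0.+1 <= cnt (Kset r hh) Q)%N.
    apply: contra hK => H; apply: (@simes_rejI _ k0.+1); rewrite K_card //.
  rewrite -ltnNge in H5.
  have E : (cnt (I :|: T) Q <= cnt (Kset r hh) Q)%N.
    rewrite -(leq_add2r (m - hh)) -{1}H3 -H1 H2 leq_add2l; exact: H4.
  exact: leq_ltn_trans E H5.
move/existsPn => noT.
have E : (cnt (I :|: T) Q <= cnt I Q)%N.
  apply: subset_leq_card; apply/subsetP => j; rewrite !inE => /andP [/orP [jI | jT] Qj].
    by rewrite jI Qj.
  by move: (noT j); rewrite jT Qj.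
apply: leq_ltn_trans E _.
case: (leqP k0.+1 #|I|) => kI.
  exact: (Hn k0.+1 kI).
exact: leq_ltn_trans (cnt_le I Q) kI.
Qed.


Lemma hardH (I : {set 'I_m}) : ct_rej p alpha I ->
  exists2 k, (1 <= k <= #|I|)%N & (k <= sr_cnt hh I k)%N.
Proof.
move=> H.
case: (boolP [exists k : 'I_#|I|.+1, (1 <= k)%N && (k <= sr_cnt hh I k)%N]).
  case/existsP => k /andP [k1 kk]; exists k => //; by rewrite k1 -ltnS ltn_ord.
move/existsPn => Hn; exfalso; move: H; apply/negP; apply: hardH' => k /andP [k1 kI].
have kI' : (k < #|I|.+1)%N by rewrite ltnS.
by have := Hn (Ordinal kI'); rewrite /= k1 /= ltnNge.
Qed.

Lemma ct_rej0 : ~~ ct_rej p alpha set0.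
Proof.
apply/negP => /forallP /(_ set0); rewrite subxx /=; apply/negP; exact: simes_rej0.
Qed.

Lemma upper (S I0 : {set 'I_m}) u : I0 \subset S -> ~~ ct_rej p alpha I0 -> (1 <= u)%N ->
  (cnt S (fun j => (hh%:R * p j <= u%:R * alpha)%R) + #|I0| < #|S| + u)%N.
Proof.
move=> I0S I0n u1.
set Q := (fun j => hh%:R * p j <= u%:R * alpha).
have E1 : (cnt S Q <= cnt I0 Q + #|S :\: I0|)%N.
  apply: leq_trans (_ : #|[set j in I0 | Q j] :|: (S :\: I0)| <= _)%N.
    apply: subset_leq_card; apply/subsetP => j; rewrite !inE => /andP [jS Qj].
    by rewrite jS Qj andbT orbC; case: (j \in I0).
  by rewrite cardsU leq_subr.
have E2 := cardsID I0 S; rewrite (setIidPr I0S) in E2.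
have E3 : (cnt I0 Q < u)%N.
  case: (leqP u #|I0|) => uI.
    rewrite ltnNge; apply: contra I0n => H; apply: (@easyE I0 u) => //.
    by rewrite u1.
  exact: leq_ltn_trans (cnt_le I0 Q) uI.
rewrite -E2. lia.
Qed.


Lemma main (S : {set 'I_m}) (hS : S != set0) :
  let h := h_alpha p alpha r in
  let f (u : nat) : int :=
    (1 - u%:Z + (#|[set i in S | h%:R * p i <= u%:R * alpha]|)%:Z)%R in
  (exists2 u : nat, (1 <= u <= #|S|)%N & (d_alpha p alpha S)%:Z = f u) /\
  (forall u : nat, (1 <= u <= #|S|)%N -> f u <= (d_alpha p alpha S)%:Z).
Proof.
move=> h f.
have P0 : (set0 \subset S) && ~~ ct_rej p alpha set0 by rewrite sub0set ct_rej0.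
have [I0 [I0S I0n tI0]] : exists I0 : {set 'I_m}, [/\ I0 \subset S, ~~ ct_rej p alpha I0
    & t_alpha p alpha S = #|I0|].
  rewrite /t_alpha (@bigop.bigmax_eq_arg _ set0
   (fun I : {set 'I_m} => (I \subset S) && ~~ ct_rej p alpha I)
   (fun I : {set 'I_m} => #|I|) P0).
  case: arg_maxnP => // I0 /andP [H1 H2] _; by exists I0.
have tS : (#|I0| <= #|S|)%N by exact: subset_leq_card.
have N1 : (0 < #|S|)%N by rewrite card_gt0.
have dE : d_alpha p alpha S = (#|S| - #|I0|)%N by rewrite /d_alpha tI0.
have UP : forall u : nat, (1 <= u)%N -> f u <= (d_alpha p alpha S)%:Z.
  move=> u u1; have := upper I0S I0n u1; rewrite /f dE /cnt /h -/hh.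
  move: (#|[set j in S | _]|) => c. move: #|S| #|I0| tS => N t tS H.
  lia.
split; last by move=> u /andP [u1 _]; exact: UP.
case: (ltnP #|I0| #|S|) => tN; last first.
  exists 1%N; first by rewrite leqnn N1.
  have := upper I0S I0n (leqnn 1); rewrite /f dE /cnt /h -/hh.
  move: (#|[set j in S | _]|) => c. move: #|S| #|I0| tS tN => N t tS tN H.
  lia.
have [I1 [I1S I1c I1top]] := topsub tN.
have I1r : ct_rej p alpha I1.
  apply/negPn/negP => H.
  have := @leq_bigmax_cond _ (fun I : {set 'I_m} => (I \subset S) && ~~ ct_rej p alpha I)
    (fun I : {set 'I_m} => #|I|) I1; rewrite I1S H => /(_ isT).
  by rewrite -/(t_alpha p alpha S) tI0 I1c ltnn.
have [k /andP [k1 kI] Hk] := hardH I1r.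
exists k; first by rewrite k1 (leq_trans kI) // I1c.
apply/eqP; rewrite eq_le UP //= andbT.
set Q := (fun j => hh%:R * p j <= k%:R * alpha).
have [i1 i1I Qi1] : exists2 i1, i1 \in I1 & Q i1.
  have : (0 < sr_cnt hh I1 k)%N by exact: leq_trans k1 Hk.
  rewrite /sr_cnt /cnt card_gt0 => /set0Pn [i1]; rewrite inE => /andP [H1 H2].
  by exists i1.
have E : (cnt I1 Q + #|S :\: I1| <= cnt S Q)%N.
  have D : [set j in I1 | Q j] :&: (S :\: I1) = set0.
    apply/setP => j; rewrite !inE.
    by case: (j \in I1); rewrite ?andbF.
  have := cardsU [set j in I1 | Q j] (S :\: I1); rewrite D cards0 subn0 => <-.
  apply: subset_leq_card; apply/subsetP => j; rewrite !inE.
  case/orP => [/andP [jI Qj] | /andP [jI jS]].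
    by rewrite (subsetP I1S _ jI) Qj.
  rewrite jS /=; apply: le_trans Qi1; apply: ler_wpM2l; first by rewrite ler0n.
  exact: I1top.
have E2 := cardsID I1 S; rewrite (setIidPr I1S) in E2.
have Hk' : (k <= cnt I1 Q)%N by [].
rewrite /f dE /h -/hh.
move: E Hk'; rewrite /cnt -/Q.
move: (#|[set j in S | Q j]|) (#|[set j in I1 | Q j]|) => c c1 E Hk'.
move: #|S :\: I1| E2 E => e E2 E.
rewrite I1c in E2.
move: #|S| #|I0| tS tN E2 => N t tS tN E2.
lia.
Qed.

End Main.

Unset Implicit Arguments.
Unset Strict Implicit.

Theorem theorem1 (R : realFieldType) (m : nat) (p : 'I_m -> R) (alpha : R)
  (r : 'I_m -> 'I_m)
  (hp : forall j, 0 <= p j <= 1)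
  (halpha : 0 <= alpha <= 1)
  (hr_bij : bijective r)
  (hr_sorted : forall a b : 'I_m, (a <= b)%N -> p (r a) <= p (r b))
  (S : {set 'I_m}) (hS : S != set0) :
  let h := h_alpha p alpha r in
  let f (u : nat) : int :=
    (1 - u%:Z + (#|[set i in S | h%:R * p i <= u%:R * alpha]|)%:Z)%R in
  (exists2 u : nat, (1 <= u <= #|S|)%N & (d_alpha p alpha S)%:Z = f u) /\
  (forall u : nat, (1 <= u <= #|S|)%N -> f u <= (d_alpha p alpha S)%:Z).
Proof.
exact: (main hp halpha hr_bij hr_sorted hS).
Qed.
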